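(* Consider the storage arbitrage model and Algorithm 1 described in the context. For each period $i$, the optimal reservation $M_i^*$ produced by Algorithm 1 depends solely on those $M_j^*$ with $M_j^*<M_i^*$; that is, the exact values of the $M_j^*$ with $M_j^*\ge M_i^*$ are not needed to determine $M_i^*$.
   Context: Time-of-Use (ToU) setting: a day is divided into periods $1,\dots,n$ with electricity price $\pi_i$ in period $i$, and $\pi_n=\min_i \pi_i$. The user has random demand $X_i$ in period $i$; the $X_i$ are independent, inelastic, and $X_i$ has a continuously differentiable density $f_i$ with $f_i(x)>0$ iff $x\ge 0$. The user owns a lossless, perfectly efficient storage of capacity $C$; $r_i$ is the energy stored at the end of period $i$, $r_0=r_n=C$, the purchase in period $i$ is $u_i=r_i+X_i-r_{i-1}\ge0$, and the expected total cost is $J=\mathbb{E}\big[\sum_{i=1}^n \pi_i(r_i+X_i-r_{i-1})\big]$. A virtual-reservation policy is a sequence $M_1,\dots,M_n$ fixed in advance (possibly exceeding $C$); at the end of period $i$ the user keeps at least $N_i=\min\{M_i,C\}$ in storage, i.e. $r_i=\max\{N_i, r_{i-1}-X_i\}$, buying from the grid only when needed; the last period's reservation fully charges the storage. $J_i(M_i):=J_i(M_i\mid M_{i+1}^*,\dots,M_n^* )$ is the expected cost over periods $i+1,\dots,n$ when reserving $M_i$ at the end of period $i$ and $M_{i+1}^*,\dots,M_n^*$ afterward. Algorithm 1 computes the $M_i^*$ backward, starting from the boundary condition that the last period's reservation is $C$ and treating the capacity as large enough that the computed reservations are not truncated: given $M_{i+1}^*,\dots,M_n^*$, if $\pi_i\ge\pi_{i+1}$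 it returns $M_i^*=0$; otherwise it returns the (unique) $M_i$ solving $\pi_i=-\frac{\mathrm{d}J_i}{\mathrm{d}M_i}$, equivalently $\pi_i=\sum_{k=i+1}^n \pi_k P_k^i(M_i)$, where $P_k^i(M_i)$ is the probability that, reserving $M_i,M_{i+1}^*,\dots,M_n^*$, period $k$ is the first period after $i$ in which the user must buy energy to charge the storage. *)

(* Defs.v *)
From HB Require Import structures.
From mathcomp Require Import all_boot all_order all_algebra.
From mathcomp Require Import all_classical all_reals all_analysis.
Set Implicit Arguments. Unset Strict Implicit. Unset Printing Implicit Defensive.
Import Order.TTheory GRing.Theory Num.Theory.
Import numFieldNormedType.Exports.
Local Open Scope classical_set_scope.
Local Open Scope ring_scope.

Section ToU.
Context {d : measure_display} {T : measurableType d} {R : realType}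
  (P : probability T R).

Definition cumdem (X : nat -> {RV P >-> R}) (i j : nat) (w : T) : R :=
  \sum_(i.+1 <= l < j.+1) X l w.

(* Event: reserving m at the end of period i and M j at the end of each later
   period j (no truncation by the capacity), period k is the first period
   after i in which the user must buy energy, i.e. r_{k-1} - X_k < M_k while
   r_{j-1} - X_j >= M_j for i < j < k (so that r_{j} = m - X_{i+1} - ... - X_j). *)
Definition firstbuy (X : nat -> {RV P >-> R}) (M : nat -> R) (m : R)
    (i k : nat) : set T :=
  [set w | (forall j, (i < j < k)%N -> M j <= m - cumdem X i j w) /\
           m - cumdem X i k w < M k].

Definition Pfirst (X : nat -> {RV P >-> R}) (M : nat -> R) (m : R)
    (i k : nat) : R :=
  fine (P (firstbuy X M m i k)).

(* One backward step of Algorithm 1: given the later reservations M (only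
   M (i+1), ..., M n are used), m is the value returned for period i. *)
Definition alg_step (n : nat) (pi : nat -> R) (X : nat -> {RV P >-> R})
    (M : nat -> R) (i : nat) (m : R) : Prop :=
  (pi i.+1 <= pi i /\ m = 0) \/
  (pi i < pi i.+1 /\
   pi i = \sum_(i.+1 <= k < n.+1) pi k * Pfirst X M m i k).

Definition indep_demands (n : nat) (X : nat -> {RV P >-> R}) : Prop :=
  forall B : nat -> set R, (forall l, measurable (B l)) ->
    fine (P (\bigcap_(l in [set l | (1 <= l <= n)%N]) (X l @^-1` B l))) =
    \prod_(1 <= l < n.+1) fine (P (X l @^-1` B l)).

Definition is_density (Y : {RV P >-> R}) (f : R -> R) : Prop :=
  forall A : set R, measurable A ->
    P (Y @^-1` A) = (\int[lebesgue_measure]_(x in A) (f x)%:E)%E.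

End ToU.

(* Main.v *)
Require Import Defs.
From HB Require Import structures.
From mathcomp Require Import all_boot all_order all_algebra.
From mathcomp Require Import all_classical all_reals all_analysis.
From mathcomp Require Import measurable_realfun.
From mathcomp Require Import lra zify.
Import Order.TTheory GRing.Theory Num.Theory.
Import numFieldNormedType.Exports.
Local Open Scope classical_set_scope.
Local Open Scope ring_scope.

Lemma int_le0 (R : realType) (D : set R) (f : R -> R) :
  (forall x, D x -> f x <= 0) ->
  (\int[lebesgue_measure]_(x in D) (f x)%:E <= 0)%E.
Proof.
move=> f0; rewrite integralE integral0_eq.
  rewrite sub0e leeNl oppe0; apply: integral_ge0 => x _; exact: funeneg_ge0.
move=> x Dx; apply: (le0_funeposE (D := D)); last by rewrite inE.
by move=> y Dy; rewrite lee_fin f0.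
Qed.
Lemma eqP_null d (T : measurableType d) (R : realType) (P : probability T R)
  (A B N : set T) : measurable A -> measurable B -> measurable N -> P N = 0%E ->
  (forall w, ~ N w -> A w <-> B w) -> P A = P B.
Proof.
move=> mA mB mN PN AB.
have H : forall A B : set T, measurable A -> measurable B ->
   (forall w, ~ N w -> A w -> B w) -> (P A <= P B)%E.
  move=> A' B' mA' mB' h.
  apply: (@le_trans _ _ (P (B' `|` N))).
    apply: le_measure; rewrite ?inE //; first exact: measurableU.
    by move=> w Aw; have [Nw|Nw] := pselect (N w); [right|left; apply: h].
  have E : (P B' + P N = P B')%E by rewrite PN adde0.
  apply: (le_trans (measureU2 _ mB' mN)); rewrite le_eqVlt; apply/orP; left; apply/eqP; exact: E.
by apply/eqP; rewrite eq_le !H // => w Nw; move/(AB w Nw).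
Qed.

Lemma Xpos_null d (T : measurableType d) (R : realType) (P : probability T R)
  (Y : {RV P >-> R}) (g : R -> R) : is_density Y g ->
  (forall x, 0 < g x <-> 0 <= x) -> P (Y @^-1` `]-oo, (0:R)]) = 0%E.
Proof.
move=> dens gpos.
have m1 : measurable (Y @^-1` `]-oo, (0:R)[) := measurable_funPTI _ (measurable_itv _).
have m2 : measurable (Y @^-1` [set (0:R)]) := measurable_funPTI _ (measurable_set1 _).
have h1 : P (Y @^-1` `]-oo, (0:R)[) = 0%E.
  apply/eqP; rewrite eq_le measure_ge0 andbT dens; last exact: measurable_itv.
  apply: int_le0 => x /=; rewrite in_itv /= => x0.
  by rewrite leNgt; apply/negP => /gpos; rewrite leNgt x0.
have h2 : P (Y @^-1` [set (0:R)]) = 0%E.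
  by rewrite dens ?integral_set1 //; exact: measurable_set1.
have -> : Y @^-1` `]-oo, (0:R)] = Y @^-1` `]-oo, (0:R)[ `|` Y @^-1` [set (0:R)].
  apply/seteqP; split => w /=; rewrite !in_itv /= le_eqVlt.
    by case/orP => [/eqP ->|->]; [right|left].
  by case => [->|->]; rewrite ?eqxx ?orbT.
apply/eqP; rewrite eq_le measure_ge0 andbT.
have E : P (Y @^-1` `]-oo, (0:R)[) + P (Y @^-1` [set (0:R)]) = 0%E by rewrite h1 h2 adde0.
apply: (le_trans (measureU2 _ m1 m2)); rewrite le_eqVlt; apply/orP; left; apply/eqP; exact: E.
Qed.

Lemma cumdem_meas d (T : measurableType d) (R : realType) (P : probability T R)
  (X : nat -> {RV P >-> R}) i j : measurable_fun setT (cumdem X i j).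
Proof. by apply: measurable_sum => l; exact: measurable_funP. Qed.

Lemma firstbuy_meas d (T : measurableType d) (R : realType) (P : probability T R)
  (X : nat -> {RV P >-> R}) M m i k : measurable (firstbuy X M m i k).
Proof.
have mg : forall j, measurable_fun setT (fun w => m - cumdem X i j w).
  by move=> j; apply: measurable_funB => //; exact: cumdem_meas.
have -> : firstbuy X M m i k =
   (\bigcap_(j in [set j | (i < j < k)%N]) ((fun w => m - cumdem X i j w) @^-1` `[M j, +oo[))
   `&` ((fun w => m - cumdem X i k w) @^-1` `]-oo, M k[).
  apply/seteqP; split => w /=.
    by case=> h1 h2; split; [move=> j /= hj; rewrite /= in_itv /= andbT; exact: h1|rewrite in_itv].
  by case=> h1; rewrite in_itv /= => h2; split => // j hj; have := h1 j hj; rewrite /= in_itv /= andbT.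
apply: measurableI.
  apply: bigcap_measurableType => j _; rewrite -[X in measurable X]setTI.
  exact: (mg j measurableT _ (measurable_itv _)).
rewrite -[X in measurable X]setTI.
exact: (mg k measurableT _ (measurable_itv _)).
Qed.

Lemma bigU_null d (T : measurableType d) (R : realType) (P : probability T R)
  (F : nat -> set T) (s : seq nat) :
  (forall l, l \in s -> measurable (F l) /\ P (F l) = 0%E) ->
  measurable (\big[setU/set0]_(l <- s) F l) /\ P (\big[setU/set0]_(l <- s) F l) = 0%E.
Proof.
elim: s => [|a s IH] h; first by rewrite big_nil; split; [exact: measurable0|exact: measure0].
rewrite big_cons.
have [ma Pa] := h a (mem_head _ _).
have [ms Ps] : measurable (\big[setU/set0]_(l <- s) F l) /\ P (\big[setU/set0]_(l <- s) F l) = 0%E.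
  by apply: IH => l ls; apply: h; rewrite inE ls orbT.
split; first exact: measurableU.
apply/eqP; rewrite eq_le measure_ge0 andbT.
have E : P (F a) + P (\big[setU/set0]_(l <- s) F l) = 0%E by rewrite Pa Ps adde0.
apply: (le_trans (measureU2 _ ma ms)); rewrite le_eqVlt; apply/orP; left; apply/eqP; exact: E.
Qed.

Lemma bigU_notin (T : Type) (F : nat -> set T) (s : seq nat) w :
  ~ (\big[setU/set0]_(l <- s) F l) w -> forall l, l \in s -> ~ F l w.
Proof.
elim: s => [|a s IH] //; rewrite big_cons => h l; rewrite inE => /orP [/eqP ->|ls] Fw.
  by apply: h; left.
by apply: (IH _ l ls Fw) => hs; apply: h; right.
Qed.

Theorem lemma3 (d : measure_display) (T : measurableType d) (R : realType)
    (P : probability T R) (n : nat) (pi : nat -> R) (C : R)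
    (X : nat -> {RV P >-> R}) (f : nat -> R -> R) (Mstar : nat -> R) :
  (forall i, (1 <= i <= n)%N -> pi n <= pi i) ->
  0 <= C ->
  indep_demands n X ->
  (forall i, (1 <= i <= n)%N ->
     [/\ is_density (X i) (f i),
         (forall x, 0 < f i x <-> 0 <= x),
         (forall x, 0 < x -> derivable (f i) x 1) &
         (forall x, 0 < x -> {for x, continuous (derive1 (f i))})]) ->
  Mstar n = C ->
  (forall i, (1 <= i < n)%N -> alg_step n pi X Mstar i (Mstar i)) ->
  forall i, (1 <= i < n)%N ->
  forall M' : nat -> R,
    (forall j, (i < j <= n)%N -> Mstar j < Mstar i -> M' j = Mstar j) ->
    (forall j, (i < j <= n)%N -> Mstar i <= Mstar j -> Mstar i <= M' j) ->
    alg_step n pi X M' i (Mstar i).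
Proof.
move=> hpin hC hind hdens hn hstep i hi M' h1 h2.
case: (hstep i hi) => [[a b]|[a b]]; [by left|right; split => //].
rewrite b; apply: eq_big_nat => k /andP[hk1 hk2]; congr (_ * _).
rewrite /Pfirst; congr fine.
set N := \big[setU/set0]_(l <- index_iota i.+1 n.+1) (X l @^-1` `]-oo, (0:R)]).
have [mN PN] : measurable N /\ P N = 0%E.
  apply: bigU_null => l; rewrite mem_index_iota => /andP[l1 l2]; split.
    exact: measurable_funPTI (measurable_itv _).
  have hl : (1 <= l <= n)%N by move: hi l1 l2; clear; lia.
  have [dl fl _ _] := hdens l hl.
  exact: Xpos_null dl fl.
apply: eqP_null; [exact: firstbuy_meas|exact: firstbuy_meas|exact: mN|exact: PN|].
move=> w Nw.
have pos : forall l, (i < l <= n)%N -> 0 < X l w.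
  move=> l hl; have := @bigU_notin _ _ _ w Nw l; rewrite mem_index_iota => H.
  rewrite ltNge; apply/negP => hle; apply: H; first by move: hl; clear; lia.
  by rewrite /= in_itv /=.
have cpos : forall j, (i < j <= n)%N -> 0 < cumdem X i j w.
  move=> j hj; rewrite /cumdem big_ltn; last by move: hj; clear; lia.
  have p1 := pos i.+1 (ltac:(move: hj; clear; lia)).
  have p2 : 0 <= \sum_(i.+2 <= l < j.+1) X l w.
    rewrite big_nat_cond; apply: sumr_ge0 => l /andP[/andP[l1 l2] _].
    by apply/ltW/pos; move: l1 l2 hj; clear; lia.
  lra.
have key : forall j, (i < j <= n)%N ->
    (Mstar j <= Mstar i - cumdem X i j w <-> M' j <= Mstar i - cumdem X i j w) /\
    (Mstar i - cumdem X i j w < Mstar j <-> Mstar i - cumdem X i j w < M' j).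
  move=> j hj; have cp := cpos j hj; case: (ltP (Mstar j) (Mstar i)) => hlt.
    by rewrite h1.
  have h' := h2 j hj hlt.
  by split; split => H; lra.
rewrite /firstbuy /=; split => [[Ha Hb]|[Ha Hb]]; split.
- move=> j hj; have hj' : (i < j <= n)%N by move: hj hk2; clear; lia.
  by apply/(proj1 (key j hj')); apply: Ha.
- have hk' : (i < k <= n)%N by move: hk1 hk2; clear; lia.
  by apply/(proj2 (key k hk')).
- move=> j hj; have hj' : (i < j <= n)%N by move: hj hk2; clear; lia.
  by apply/(proj1 (key j hj')); apply: Ha.
- have hk' : (i < k <= n)%N by move: hk1 hk2; clear; lia.
  by apply/(proj2 (key k hk')).
Qed.
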